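(* Let $C\subseteq\mathbb{F}_2^n$ be a code. Then (1) $\displaystyle \mathrm{PUD}(C)\le 1-\frac{1}{|C|}\sum_{j=0}^n W^{\mathrm{H}}_j(C)\sum_{i=0}^n(1-q)^i(1-p)^{n-i}\sum_{s\in\mathcal S\left(\frac{\delta(C)+(\gamma-1)(i-j)}{2}\right)}\left(\frac{q}{1-p}\right)^s\lambda(i,j,s)$; (2) $\displaystyle \mathrm{PUD}(C)\le 1-\frac{1}{|C|}\sum_{j=0}^n W^{\mathrm{H}}_j(C)\sum_{i=0}^n(1-q)^i(1-p)^{n-i}\sum_{s\in\mathcal S\left(\frac{\hat\delta(C)+i(\gamma-1)}{2}\right)}\left(\frac{q}{1-p}\right)^s\lambda(i,j,s)$.
   Context: Let $n\ge2$ and fix reals $0<p\le q<1/2$. Let $\mathbb{P}^n(y\mid x)=\prod_{i=1}^n\mathbb{P}(y_i\mid x_i)$ where $\mathbb{P}(1\mid0)=p$, $\mathbb{P}(0\mid0)=1-p$, $\mathbb{P}(0\mid1)=q$, $\mathbb{P}(1\mid1)=1-q$. Let $\gamma:=\log_{q/(1-p)}\left(\frac{p}{1-q}\right)$. For $x\in\mathbb{F}_2^n$, $\omega^{\mathrm{H}}(x)=|\{i:x_i=1\}|$; for $a,b\in\{0,1\}$, $d_{ab}(y,x)=|\{i: y_i=a,\ x_i=b\}|$. Discrepancy: $\delta(y,x):=\gamma\,d_{10}(y,x)+d_{01}(y,x)$; symmetric discrepancy: $\hat\delta(y,x):=\delta(y,x)-\omega^{\mathrm{H}}(y)(\gamma-1)$.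 A code is $C\subseteq\mathbb{F}_2^n$ with $|C|\ge2$; $\delta(C)=\min\{\delta(x,x'):x,x'\in C,\ x\ne x'\}$, $\hat\delta(C)=\min\{\hat\delta(x,x'):x,x'\in C,\ x\ne x'\}$. $W^{\mathrm{H}}_j(C)$ is the number of codewords of Hamming weight $j$. The maximum likelihood decoder $D_C$ sends $y$ to $x$ if $x$ is the unique codeword maximizing $\mathbb{P}^n(y\mid x)$ and to a failure symbol $\mathbf f\notin\mathbb{F}_2^n$ otherwise; $\mathrm{PUD}(C):=\frac{1}{|C|}\sum_{x\in C}\sum_{y\in\mathbb{F}_2^n,\ D_C(y)\ne x}\mathbb{P}^n(y\mid x)$. Let $\mathcal S:=\{a+\gamma b:a,b\in\mathbb N\}$ and $\mathcal S(h):=\{s\in\mathcal S: 0\le s<h\}$. For real $a,b$, $\mathrm{Bin}(a,b)=\binom ab$ if $a,b\in\mathbb N$ and $0$ otherwise, and $\lambda(i,j,s):=\mathrm{Bin}\!\left(j,\frac{i\gamma-s+j}{\gamma+1}\right)\mathrm{Bin}\!\left(n-j,\frac{s-j+i}{\gamma+1}\right)$ (this equals the number of $y$ of weight $i$ with $\delta(y,x)=s$ for any fixed $x$ of weight $j$). *)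

(* Defs.v *)
From HB Require Import structures.
From mathcomp Require Import all_boot all_order all_algebra.
From mathcomp Require Import reals exp.
Set Implicit Arguments. Unset Strict Implicit. Unset Printing Implicit Defensive.
Import Order.TTheory GRing.Theory Num.Theory.
Local Open Scope ring_scope.

Section BinaryAsymmetricChannel.
Variable R : realType.
Variable n : nat.
Variables p q : R.

(* F_2^n : binary words of length n, a word is a function 'I_n -> bool
   (false = 0, true = 1). *)
Definition word := {ffun 'I_n -> bool}.

(* single-letter channel P(a | b): output a given input b *)
Definition chP (a b : bool) : R :=
  match b, a with
  | false, true => p
  | false, false => 1 - p
  | true, false => q
  | true, true => 1 - q
  end.

Definition Pn (y x : word) : R := \prod_(i < n) chP (y i) (x i).

Definition gam : R := ln (p / (1 - q)) / ln (q / (1 - p)).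

Definition wtH (x : word) : nat := #|[set i | x i]|.

Definition dab (a b : bool) (y x : word) : nat :=
  #|[set i | (y i == a) && (x i == b)]|.

Definition disc (y x : word) : R :=
  gam * (dab true false y x)%:R + (dab false true y x)%:R.
Definition sdisc (y x : word) : R :=
  disc y x - (wtH y)%:R * (gam - 1).

Definition dpairs (C : {set word}) : seq (word * word) :=
  [seq u <- [seq (x, x') | x <- enum C, x' <- enum C] | u.1 != u.2].

Definition minseq (s : seq R) : R := \big[Num.min/head 0 s]_(r <- s) r.

Definition discC (C : {set word}) : R :=
  minseq [seq disc u.1 u.2 | u <- dpairs C].
Definition sdiscC (C : {set word}) : R :=
  minseq [seq sdisc u.1 u.2 | u <- dpairs C].

Definition WH (C : {set word}) (j : nat) : nat := #|[set x in C | wtH x == j]|.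

(* Maximum likelihood decoder: Some x if x is the unique codeword maximizing
   P^n(y | .), None (the failure symbol f) otherwise. *)
Definition mldec (C : {set word}) (y : word) : option word :=
  [pick x in C | [forall x', (x' \in C) ==> (x' != x) ==> (Pn y x' < Pn y x)]].

Definition PUD (C : {set word}) : R :=
  (#|C|%:R)^-1 * \sum_(x in C) \sum_(y : word | mldec C y != Some x) Pn y x.

Definition Bin (a b : R) : R :=
  if (a \is a Num.nat) && (b \is a Num.nat)
  then ('C(Num.truncn a, Num.truncn b))%:R else 0.

Definition lam (i j : nat) (s : R) : R :=
  Bin j%:R ((i%:R * gam - s + j%:R) / (gam + 1)) *
  Bin (n - j)%:R ((s - j%:R + i%:R) / (gam + 1)).

(* Since gam > 0 (under the standing assumptions), every
   a + gam b < h has a <= truncn h and b <= truncn (h / gam), so the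
   enumeration bound M below covers all of S(h). *)
Definition Sh (h : R) : seq R :=
  let M := (Num.truncn h + Num.truncn (h / gam)).+1 in
  undup [seq s <- [seq a%:R + gam * b%:R | a <- iota 0 M, b <- iota 0 M]
        | (0 <= s) && (s < h)].

End BinaryAsymmetricChannel.

(* Main.v *)
Require Import Defs.
From HB Require Import structures.
From mathcomp Require Import all_boot all_order all_algebra.
From mathcomp Require Import reals exp.
From mathcomp Require Import ring lra zify.
Import Order.TTheory GRing.Theory Num.Theory.
Local Open Scope ring_scope.

Lemma split_help {T : finType} {X B1 B2 : {set T}} : B1 \subset X -> B2 \subset ~: X ->
  (B1 :|: B2) :&: X = B1 /\ (B1 :|: B2) :\: X = B2.
Proof.
move=> /subsetP s1 /subsetP s2; split; apply/setP => t; rewrite !inE;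
move: (s1 t) (s2 t); rewrite !inE;
by case: (t \in X); case: (t \in B1); case: (t \in B2) => //= h1 h2; first [by case: (h1 isT) | by case: (h2 isT)].
Qed.

Lemma card_split (T : finType) (X : {set T}) a b :
  #|[set Y : {set T} | (#|Y :&: X| == a) && (#|Y :\: X| == b)]| = ('C(#|X|, a) * 'C(#|~: X|, b))%N.
Proof.
rewrite -!cards_draws -cardsX.
set D := setX _ _.
have inj : {in D &, injective (fun u : {set T} * {set T} => u.1 :|: u.2)}.
  move=> [B1 B2] [B1' B2']; rewrite !inE /=.
  move=> /andP[/andP[s1 _] /andP[s2 _]] /andP[/andP[s1' _] /andP[s2' _]] E.
  have [e1 e2] := split_help s1 s2; have [e1' e2'] := split_help s1' s2'.
  by congr pair; [rewrite -e1 E e1' | rewrite -e2 E e2'].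
rewrite -(card_in_imset inj); apply: eq_card => Y; rewrite inE.
apply/idP/imsetP.
  move=> /andP[ha hb]; exists (Y :&: X, Y :\: X); last by rewrite /= setID.
  by rewrite !inE ha hb subsetIr setDE subsetIr.
move=> [[B1 B2]]; rewrite !inE /= => /andP[/andP[s1 ca] /andP[s2 cb]] ->.
by have [-> ->] := split_help s1 s2; rewrite ca cb.
Qed.

Section Proof.
Variables (R : realType) (n : nat) (p q : R).
Hypotheses (hp : 0 < p) (hpq : p <= q) (hq : q < 1 / 2).

Local Notation g := (gam p q).
Local Notation r := (q / (1 - p)).
Ltac lraS := move: (hp) (hpq) (hq) => ? ? ?; lra.

Lemma p1 : 0 < 1 - p. Proof. lraS. Qed.
Lemma q1 : 0 < 1 - q. Proof. lraS. Qed.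
Lemma r_gt0 : 0 < r. Proof. apply: divr_gt0; [lraS | exact: p1]. Qed.
Lemma r_lt1 : r < 1.
Proof. by rewrite ltr_pdivrMr ?p1 //; lraS. Qed.
Lemma s_gt0 : 0 < p / (1 - q). Proof. apply: divr_gt0; [lraS | exact: q1]. Qed.
Lemma s_lt1 : p / (1 - q) < 1.
Proof. by rewrite ltr_pdivrMr ?q1 //; lraS. Qed.
Lemma lnr_lt0 : ln r < 0. Proof. by apply: ln_lt0; rewrite r_gt0 r_lt1. Qed.
Lemma lns_lt0 : ln (p / (1 - q)) < 0. Proof. by apply: ln_lt0; rewrite s_gt0 s_lt1. Qed.
Lemma g_gt0 : 0 < g.
Proof. by rewrite /gam; apply: divr_lt0_lt0 ?lnr_lt0 ?lns_lt0 || (rewrite ltr_ndivlMr ?lnr_lt0 // mul0r lns_lt0). Qed.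
Lemma rg : r `^ g = p / (1 - q).
Proof.
rewrite /powR gt_eqF ?r_gt0 // /gam divfK; last by rewrite lt_eqF // lnr_lt0.
by rewrite lnK // posrE s_gt0.
Qed.

Definition cst (a b : bool) : R := if a && ~~ b then g else if ~~ a && b then 1 else 0.

Lemma cardR (P : pred 'I_n) : (#|[set i | P i]|)%:R = \sum_i (if P i then 1 else 0) :> R.
Proof.
rewrite -sum1_card natr_sum big_mkcond /=; apply: eq_bigr => i _.
by rewrite inE; case: (P i).
Qed.

Lemma discE (y x : word n) : disc p q y x = \sum_k cst (y k) (x k).
Proof.
rewrite /disc /dab !cardR mulr_sumr -big_split; apply: eq_bigr => k _ /=.
by rewrite /cst; case: (y k); case: (x k); rewrite /= ?mulr1 ?mulr0 ?addr0 ?add0r.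
Qed.

Lemma wtE (y : word n) : (wtH y)%:R = \sum_k (if y k then 1 else 0) :> R.
Proof. by rewrite /wtH cardR. Qed.

Lemma disc_tri (x y z : word n) : disc p q x z <= disc p q x y + disc p q y z.
Proof.
rewrite !discE -big_split; apply: ler_sum => k _ /=.
have := g_gt0; rewrite /cst.
by case: (x k); case: (y k); case: (z k) => /= ?; lra.
Qed.

Lemma disc_swap (x y : word n) :
  disc p q x y = disc p q y x + (g - 1) * ((wtH x)%:R - (wtH y)%:R).
Proof.
rewrite !discE !wtE -sumrB mulr_sumr -big_split; apply: eq_bigr => k _ /=.
by rewrite /cst; case: (x k); case: (y k) => /=; ring.
Qed.

Lemma disc_ge0 (y x : word n) : 0 <= disc p q y x.
Proof.
rewrite discE; apply: sumr_ge0 => k _; have := g_gt0; rewrite /cst.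
by case: (x k); case: (y k) => /= ?; lra.
Qed.


Lemma chPE a b : chP p q a b = (if a then 1 - q else 1 - p) * r `^ (cst a b).
Proof.
have q0 : 1 - q != 0 by rewrite gt_eqF // q1.
have p0 : 1 - p != 0 by rewrite gt_eqF // p1.
rewrite /cst; case: a; case: b => /=; rewrite ?powRr0 ?mulr1 //.
  by rewrite rg mulrC divfK.
by rewrite powRr1 ?(ltW r_gt0) // mulrC divfK.
Qed.

Lemma powR_sum (s : seq 'I_n) (f : 'I_n -> R) :
  \prod_(k <- s) r `^ f k = r `^ (\sum_(k <- s) f k).
Proof.
elim: s => [|a s IH]; first by rewrite !big_nil powRr0.
rewrite !big_cons IH powRD //; by rewrite (gt_eqF r_gt0) implybT.
Qed.

Lemma PnE (y x : word n) :
  Pn p q y x = (1 - q) ^+ (wtH y) * (1 - p) ^+ (n - wtH y) * r `^ disc p q y x.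
Proof.
rewrite /Pn (eq_bigr _ (fun k _ => chPE _ _)) big_split /= powR_sum -discE.
congr (_ * _).
rewrite (bigID (fun k => y k)) /=.
rewrite (eq_bigr (fun=> 1 - q)); last by move=> k ->.
rewrite [X in _ * X](eq_bigr (fun=> 1 - p)); last by move=> k /negbTE ->.
rewrite (eq_bigl (fun k => k \in [set k | y k])); last by move=> k; rewrite inE.
rewrite [X in _ * X](eq_bigl (fun k => k \in ~: [set k | y k])); last by move=> k; rewrite !inE.
rewrite !prodr_const; congr (_ * _ ^+ _).
have := cardsC [set k | y k]; rewrite card_ord /wtH; set a := #|[set k | y k]|; set b := #|~: _|; lia.
Qed.

Lemma Pn_ge0 (y x : word n) : 0 <= Pn p q y x.
Proof.
apply: prodr_ge0 => k _; move: (hp) (hpq) (hq) => ? ? ?.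
by case: (y k); case: (x k) => /=; lra.
Qed.

Lemma Pn_sum1 (x : word n) : \sum_y Pn p q y x = 1.
Proof.
rewrite /Pn -(bigA_distr_bigA (fun k b => chP p q b (x k))) /=.
apply: big1 => k _; rewrite big_bool /=.
by case: (x k) => /=; ring.
Qed.


Lemma powR_ltr a b : a < b -> r `^ b < r `^ a.
Proof.
move=> ab; rewrite -ltr_ln ?posrE ?powR_gt0 ?r_gt0 // !ln_powR ltr_nM2r //.
exact: lnr_lt0.
Qed.

Lemma Pn_lt {y x x' : word n} : disc p q y x < disc p q y x' -> Pn p q y x' < Pn p q y x.
Proof.
move=> h; rewrite !PnE ltr_pM2l ?powR_ltr //.
by apply: mulr_gt0; apply: exprn_gt0; [exact: q1 | exact: p1].
Qed.

Lemma mldec_ok (C : {set word n}) (x y : word n) : x \in C ->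
  (forall x', x' \in C -> x' != x -> disc p q y x < disc p q y x') ->
  mldec p q C y = Some x.
Proof.
move=> xC H; rewrite /mldec; case: pickP => [z /andP[zC /forallP Hz] | Hn].
  case: (eqVneq z x) => [-> // | zx].
  have := Hz x; rewrite xC eq_sym zx /= => h1.
  by have := Pn_lt (H z zC zx); rewrite ltNge (ltW h1).
have := Hn x; rewrite xC /=; move/negbT/negP; case.
apply/forallP => x'; apply/implyP => x'C; apply/implyP => x'x.
exact: Pn_lt (H _ x'C x'x).
Qed.

Lemma bigmin_le (s : seq R) x0 t : t \in s -> \big[Num.min/x0]_(u <- s) u <= t.
Proof.
elim: s => // a s IH; rewrite inE big_cons => /orP[/eqP -> | ts].
  by rewrite ge_min lexx.
by rewrite ge_min (IH ts) orbT.
Qed.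

Lemma dpairs_mem (C : {set word n}) x x' : x \in C -> x' \in C -> x != x' ->
  (x, x') \in dpairs C.
Proof.
move=> xC x'C xx'; rewrite /dpairs mem_filter /= xx' /=.
by apply: (allpairs_f (fun a b => (a, b))); rewrite mem_enum.
Qed.

Lemma discC_le (C : {set word n}) x x' : x \in C -> x' \in C -> x != x' ->
  discC p q C <= disc p q x x'.
Proof.
move=> xC x'C xx'; apply: bigmin_le.
by apply/mapP; exists (x, x'); [exact: dpairs_mem |].
Qed.

Lemma sdiscC_le (C : {set word n}) x x' : x \in C -> x' \in C -> x != x' ->
  sdiscC p q C <= sdisc p q x x'.
Proof.
move=> xC x'C xx'; apply: bigmin_le.
by apply/mapP; exists (x, x'); [exact: dpairs_mem |].
Qed.


Definition setw (y : word n) : {set 'I_n} := [set k | y k].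

Lemma setw_inj : injective setw.
Proof.
move=> y1 y2 E; apply/ffunP => k.
by move/setP: E => /(_ k); rewrite /setw !inE => ->.
Qed.

Lemma d11E (y x : word n) : dab true true y x = #|setw y :&: setw x|.
Proof. by apply: eq_card => k; rewrite !inE; case: (y k); case: (x k). Qed.
Lemma d10E (y x : word n) : dab true false y x = #|setw y :\: setw x|.
Proof. by apply: eq_card => k; rewrite !inE; case: (y k); case: (x k). Qed.
Lemma d01E (y x : word n) : dab false true y x = #|setw x :\: setw y|.
Proof. by apply: eq_card => k; rewrite !inE; case: (y k); case: (x k). Qed.

Lemma wt_split (y x : word n) : wtH y = (dab true true y x + dab true false y x)%N.
Proof. by rewrite d11E d10E cardsID. Qed.
Lemma wtx_split (y x : word n) : wtH x = (dab true true y x + dab false true y x)%N.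
Proof. by rewrite d11E d01E setIC cardsID. Qed.

Lemma card_words (x : word n) a b :
  #|[set y : word n | (dab true true y x == a) && (dab true false y x == b)]| =
  ('C(wtH x, a) * 'C(n - wtH x, b))%N.
Proof.
have -> : (n - wtH x)%N = #|~: setw x|.
  have := cardsC (setw x); rewrite card_ord /wtH; set u := #|setw x|; set v := #|~: _|; lia.
rewrite -[wtH x]/#|setw x| -card_split -(card_imset _ setw_inj).
apply: eq_card => Y; rewrite !inE; apply/imsetP/idP.
  move=> [y]; rewrite inE => cond ->; rewrite -d11E -d10E; exact: cond.
move=> cond; exists [ffun k => k \in Y].
  by rewrite inE d11E d10E; have -> : setw [ffun k => k \in Y] = Y by apply/setP => k; rewrite !inE ffunE.
by apply/setP => k; rewrite !inE ffunE.
Qed.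


Lemma g1_neq0 : g + 1 != 0.
Proof. have := g_gt0; move=> h; rewrite gt_eqF //; lra. Qed.

Lemma KF {x y : word n} {i : nat} {s : R} : wtH y = i -> disc p q y x = s ->
  (i%:R * g - s + (wtH x)%:R) / (g + 1) = (dab true true y x)%:R /\
  (s - (wtH x)%:R + i%:R) / (g + 1) = (dab true false y x)%:R.
Proof.
move=> <- <-; rewrite (wtx_split y x) (wt_split y x) /disc !natrD.
have := g1_neq0 => h.
by split; field.
Qed.

Lemma lam_count (x : word n) (i : nat) (s : R) :
  (#|[set y : word n | (wtH y == i) && (disc p q y x == s)]|)%:R = lam n p q i (wtH x) s.
Proof.
rewrite /lam /Bin !natr_nat /=.
set A := (_ / _); set B := (_ / _).
case hA : (A \is a Num.nat); last first.
  rewrite /= mul0r; apply/eqP; rewrite pnatr_eq0 cards_eq0; apply/eqP/setP => y.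
  rewrite !inE; apply/negP => /andP[/eqP wy /eqP dy]; have [e1 _] := KF wy dy.
  by move: hA; rewrite /A e1 natr_nat.
case hB : (B \is a Num.nat); last first.
  rewrite /= mulr0; apply/eqP; rewrite pnatr_eq0 cards_eq0; apply/eqP/setP => y.
  rewrite !inE; apply/negP => /andP[/eqP wy /eqP dy]; have [_ e2] := KF wy dy.
  by move: hB; rewrite /B e2 natr_nat.
rewrite /=.
rewrite !natrK -natrM -card_words.
have eA := truncnK hA; have eB := truncnK hB.
set a := Num.truncn A in eA *; set b := Num.truncn B in eB *.
congr (_%:R); apply: eq_card => y; rewrite !inE.
apply/andP/andP => [[/eqP wy /eqP dy] | [/eqP h11 /eqP h10]].
  have [e1 e2] := KF wy dy.
  by split; rewrite -(eqr_nat R) -?e1 -?e2 ?eA ?eB.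
have hsum : A + B = i%:R by rewrite /A /B; have := g1_neq0 => h; field.
split; apply/eqP.
  apply/eqP; rewrite -(eqr_nat R) (wt_split y x) natrD h11 h10 eA eB hsum //.
have hj := wtx_split y x.
have hd01 : (dab false true y x)%:R = (wtH x)%:R - a%:R :> R by rewrite hj natrD h11; ring.
by rewrite /disc hd01 h10 eA eB /A /B; have := g1_neq0 => h; field.
Qed.


Lemma Sh_mem (y x : word n) (h : R) : (disc p q y x \in Sh p q h) = (disc p q y x < h).
Proof.
rewrite /Sh mem_undup mem_filter disc_ge0 andTb.
apply/andP/idP => [[]//|dh]; split => //.
have gp := g_gt0.
have h0 : 0 <= h by apply: le_trans (disc_ge0 y x) (ltW dh).
have e1 : (dab false true y x)%:R <= disc p q y x.
  by rewrite /disc lerDr; apply: mulr_ge0; [exact: ltW | exact: ler0n].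
have e2 : (dab true false y x)%:R * g <= disc p q y x.
  by rewrite /disc mulrC lerDl.
have t1 : (dab false true y x <= Num.truncn h)%N.
  by rewrite truncn_ge_nat //; apply: le_trans e1 (ltW dh).
have t2 : (dab true false y x <= Num.truncn (h / g))%N.
  rewrite truncn_ge_nat; last by apply: divr_ge0 => //; exact: ltW.
  rewrite ler_pdivlMr //.
  by apply: le_trans e2 (ltW dh).
rewrite {1}/disc addrC.
apply: (allpairs_f (fun a b : nat => a%:R + g * b%:R)); rewrite mem_iota /= add0n ltnS.
  by apply: leq_trans t1 (leq_addr _ _).
by apply: leq_trans t2 (leq_addl _ _).
Qed.


Lemma sum_uniq_eq (l : seq R) (t c : R) : uniq l ->
  \sum_(s <- l) (if t == s then c else 0) = if t \in l then c else 0.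
Proof.
elim: l => [|a l IH]; first by rewrite big_nil.
rewrite big_cons inE /= => /andP[al ul]; rewrite IH //.
case: (eqVneq t a) => [-> | ta] /=; last by rewrite add0r.
by rewrite (negbTE al) addr0.
Qed.

Lemma inner_eq (x : word n) (i : nat) (h : R) :
  \sum_(s <- Sh p q h) r `^ s * lam n p q i (wtH x) s =
  \sum_y (if (wtH y == i) && (disc p q y x < h) then r `^ disc p q y x else 0).
Proof.
have step s : r `^ s * lam n p q i (wtH x) s =
    \sum_y (if (wtH y == i) && (disc p q y x == s) then r `^ disc p q y x else 0).
  rewrite -lam_count -sum1_card natr_sum mulr_sumr big_mkcond; apply: eq_bigr => y _.
  rewrite inE; case: ifP => [/andP[_ /eqP ->]|_]; by rewrite ?mulr1 ?mulr0.
rewrite (eq_bigr _ (fun s _ => step s)) exchange_big; apply: eq_bigr => y _.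
case: (wtH y == i) => /=; last by rewrite big1.
by rewrite sum_uniq_eq ?Sh_mem //; exact: undup_uniq.
Qed.

Definition FF (H : nat -> nat -> R) (j : nat) : R :=
  \sum_(i < n.+1) (1 - q) ^+ i * (1 - p) ^+ (n - i) *
    \sum_(s <- Sh p q (H i j)) r `^ s * lam n p q i j s.

Lemma wt_le (y : word n) : (wtH y < n.+1)%N.
Proof. by rewrite ltnS /wtH -[X in (_ <= X)%N](card_ord n) max_card. Qed.

Lemma G_eq (H : nat -> nat -> R) (x : word n) :
  \sum_(y | disc p q y x < H (wtH y) (wtH x)) Pn p q y x = FF H (wtH x).
Proof.
apply/esym; rewrite /FF.
under eq_bigr => i _ do rewrite inner_eq mulr_sumr.
rewrite exchange_big [RHS]big_mkcond; apply: eq_bigr => y _.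
rewrite (bigD1 (Ordinal (wt_le y))) //= eqxx /= big1 ?addr0.
  by case: ifP => _; rewrite ?mulr0 // PnE.
move=> i ni; have -> : (wtH y == i) = false.
  by apply/negbTE; apply: contra ni => /eqP e; apply/eqP/val_inj; rewrite /= e.
by rewrite /= mulr0.
Qed.


Lemma WH_sum (C : {set word n}) (F : nat -> R) :
  \sum_(x in C) F (wtH x) = \sum_(j < n.+1) (WH C j)%:R * F j.
Proof.
have e (j : 'I_n.+1) : (WH C j)%:R * F j = \sum_(x in C) (if wtH x == j then F (wtH x) else 0).
  rewrite /WH -sum1_card natr_sum mulr_suml [RHS]big_mkcond [LHS]big_mkcond.
  apply: eq_bigr => x _; rewrite !inE; case: (x \in C) => //=.
  by case: eqP => [->|]; rewrite ?mul1r ?mul0r.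
rewrite (eq_bigr _ (fun j _ => e j)) exchange_big; apply: eq_bigr => x _.
rewrite (bigD1 (Ordinal (wt_le x))) //= eqxx big1 ?addr0 //.
move=> i ni; have -> : (wtH x == i) = false.
  by apply/negbTE; apply: contra ni => /eqP e'; apply/eqP/val_inj; rewrite /= e'.
by [].
Qed.

Lemma main_gen (C : {set word n}) (H : nat -> nat -> R) :
  (0 < #|C|)%N ->
  (forall x y, x \in C -> disc p q y x < H (wtH y) (wtH x) ->
     forall x', x' \in C -> x' != x -> disc p q y x < disc p q y x') ->
  PUD p q C <= 1 - (#|C|%:R)^-1 * \sum_(j < n.+1) (WH C j)%:R * FF H j.
Proof.
move=> C0 HH.
have step x : x \in C ->
    \sum_(y | mldec p q C y != Some x) Pn p q y x <= 1 - FF H (wtH x).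
  move=> xC; have := Pn_sum1 x.
  rewrite (bigID (fun y => mldec p q C y != Some x)) /= => <-.
  rewrite -G_eq -addrA lerDl subr_ge0.
  rewrite big_mkcond [X in _ <= X]big_mkcond; apply: ler_sum => y _.
  case: ifP => h.
    by rewrite (@mldec_ok C x y xC (HH x y xC h)) eqxx.
  by case: ifP => _; [exact: Pn_ge0 | exact: lexx].
rewrite /PUD -WH_sum.
have Cn0 : (#|C|%:R : R) != 0 by rewrite pnatr_eq0 -lt0n.
apply: le_trans (ler_wpM2l _ (ler_sum _ step)) _.
  by rewrite invr_ge0 ler0n.
by rewrite sumrB sumr_const mulrBr mulVf.
Qed.


Lemma thr1 (C : {set word n}) (x y : word n) : x \in C ->
  disc p q y x < (discC p q C + (g - 1) * ((wtH y)%:R - (wtH x)%:R)) / 2 ->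
  forall x', x' \in C -> x' != x -> disc p q y x < disc p q y x'.
Proof.
move=> xC h x' x'C x'x.
have h1 := @discC_le C x x' xC x'C (ltac:(by rewrite eq_sym)).
have h2 := disc_tri x y x'.
have h3 := disc_swap x y.
move: h h1 h2 h3; rewrite !mulrBr.
move: (disc p q y x) (disc p q y x') (disc p q x y) (disc p q x x') (discC p q C)
  ((g - 1) * (wtH y)%:R) ((g - 1) * (wtH x)%:R) => a b c d e u v.
move=> *; lra.
Qed.

Lemma thr2 (C : {set word n}) (x y : word n) : x \in C ->
  disc p q y x < (sdiscC p q C + (wtH y)%:R * (g - 1)) / 2 ->
  forall x', x' \in C -> x' != x -> disc p q y x < disc p q y x'.
Proof.
move=> xC h x' x'C x'x.
have h1 := @sdiscC_le C x x' xC x'C (ltac:(by rewrite eq_sym)).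
have h2 := disc_tri x y x'.
have h3 := disc_swap x y.
move: h h1 h2 h3; rewrite /sdisc [(wtH y)%:R * _]mulrC [(wtH x)%:R * _]mulrC !mulrBr.
move: (disc p q y x) (disc p q y x') (disc p q x y) (disc p q x x') (sdiscC p q C)
  ((g - 1) * (wtH y)%:R) ((g - 1) * (wtH x)%:R) => a b c d e u v.
move=> *; lra.
Qed.

End Proof.

Theorem mainTheorem9 (R : realType) (n : nat) (p q : R)
    (C : {set word n})
    (hn : (2 <= n)%N) (hp : 0 < p) (hpq : p <= q) (hq : q < 1 / 2)
    (hC : (2 <= #|C|)%N) :
  PUD p q C <=
    1 - (#|C|%:R)^-1 *
      \sum_(j < n.+1) (WH C j)%:R *
        \sum_(i < n.+1) (1 - q) ^+ i * (1 - p) ^+ (n - i) *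
          \sum_(s <- Sh p q ((discC p q C + (gam p q - 1) * (i%:R - j%:R)) / 2))
             (q / (1 - p)) `^ s * lam n p q i j s
  /\
  PUD p q C <=
    1 - (#|C|%:R)^-1 *
      \sum_(j < n.+1) (WH C j)%:R *
        \sum_(i < n.+1) (1 - q) ^+ i * (1 - p) ^+ (n - i) *
          \sum_(s <- Sh p q ((sdiscC p q C + i%:R * (gam p q - 1)) / 2))
             (q / (1 - p)) `^ s * lam n p q i j s.
Proof.
have C0 : (0 < #|C|)%N by apply: leq_trans hC.
split.
  exact: (@main_gen R n p q hp hpq hq C
    (fun i j => (discC p q C + (gam p q - 1) * (i%:R - j%:R)) / 2) C0
    (fun x y xC h => @thr1 R n p q hp hpq hq C x y xC h)).
exact: (@main_gen R n p q hp hpq hq C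
  (fun i j => (sdiscC p q C + i%:R * (gam p q - 1)) / 2) C0
  (fun x y xC h => @thr2 R n p q hp hpq hq C x y xC h)).
Qed.
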